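(* Let $n\ge 2$, and let $S$ be a semitransitive subsemigroup of $\mathcal{I}_n\setminus\mathcal{S}_n$ with $|S|\le 2n$, let $g,h$ be its two non-zero idempotents, and let $S'=gSg\cup gSh\cup hSg\cup hSh$. Let $\varphi\in S'$ be nilpotent. Then for every $x\in\mathrm{dom}(\varphi)$, if $x\in X_i$ and $x\varphi\in X_j$, then $j>i$. In particular, a nilpotent element of $S'$ has no arrow from a transitivity block to itself.
   Context: $\mathcal{I}_n$ denotes the symmetric inverse semigroup of all partial injective maps of $X=\{1,\dots,n\}$ to itself, with maps written on the right and composed left to right; $0$ denotes the empty map, and $\varphi$ is nilpotent if $\varphi^k=0$ for some $k$. $\mathcal{S}_n$ is the symmetric group on $X$. A semigroup $S$ of partial transformations of $X$ is semitransitive if for all $x,y\in X$ there is $\varphi\in S$ with $x\varphi=y$ or $y\varphi=x$. It is known that such an $S$ (semitransitive in $\mathcal{I}_n\setminus\mathcal{S}_n$, $|S|\le 2n$) has exactly two non-zero idempotents $g,h$, with disjoint domains whose union is $X$. For $x,y\in X$ write $x\ge y$ if $x\varphi=y$ for some $\varphi\in S$; this is a total preorder, and its equivalence classes are the transitivity blocks $X_1,\dots,X_m$, numbered so that for $x\in X_i$, $y\in X_j$ one has $x\ge y$ iff $i\le j$. An element $\alpha$ has an arrow $x\to y$ if $x\in\mathrm{dom}(\alpha)$ and $x\alpha=y$. *)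

(* Defs.v *)
From mathcomp Require Import all_boot.
Set Implicit Arguments. Unset Strict Implicit. Unset Printing Implicit Defensive.

(* Partial transformations of X = {0,...,n-1} (standing for {1,...,n}):
   f x = Some y means x \in dom f and x f = y; f x = None means x \notin dom f. *)
Definition ptrans (n : nat) := {ffun 'I_n -> option 'I_n}.

Definition pinj n (f : ptrans n) : Prop :=
  forall x y z : 'I_n, f x = Some z -> f y = Some z -> x = y.

(* total map; a total partial injection of a finite set is a permutation,
   i.e. an element of S_n *)
Definition ptotal n (f : ptrans n) : Prop := forall x : 'I_n, f x <> None.

(* composition, maps written on the right, composed left to right:
   x (f g) = (x f) g *)
Definition tcomp n (f g : ptrans n) : ptrans n := [ffun x => obind g (f x)].

Definition pzero n : ptrans n := [ffun => None].
Definition pid n : ptrans n := [ffun x => Some x].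

Definition ppow n (f : ptrans n) (k : nat) : ptrans n := iter k (tcomp f) (pid n).

Definition nilpotent n (f : ptrans n) : Prop := exists k, ppow f k = pzero n.

Definition pidem n (e : ptrans n) : Prop := tcomp e e = e.

Definition semigroup n (S : {set ptrans n}) : Prop :=
  forall f g, f \in S -> g \in S -> tcomp f g \in S.

Definition semitransitive n (S : {set ptrans n}) : Prop :=
  forall x y : 'I_n, exists2 f, f \in S & (f x = Some y \/ f y = Some x).

(* the preorder x >= y : x f = y for some f in S *)
Definition reachS n (S : {set ptrans n}) (x y : 'I_n) : Prop :=
  exists2 f, f \in S & f x = Some y.

(* Main.v *)
Require Import Defs.
From mathcomp Require Import all_boot.
From Stdlib Require Import Classical.
Set Implicit Arguments. Unset Strict Implicit.

Lemma tcompE n (f g : ptrans n) x : tcomp f g x = obind g (f x).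
Proof. by rewrite /tcomp ffunE. Qed.

Lemma pidE n x : pid n x = Some x.
Proof. by rewrite /pid ffunE. Qed.

Lemma pzeroE n x : pzero n x = None.
Proof. by rewrite /pzero ffunE. Qed.

Lemma tcompA n (f g h : ptrans n) : tcomp (tcomp f g) h = tcomp f (tcomp g h).
Proof.
apply/ffunP => x; rewrite !tcompE; case: (f x) => [y|] //=; by rewrite tcompE.
Qed.

Lemma tcomp1l n (f : ptrans n) : tcomp (pid n) f = f.
Proof. by apply/ffunP => x; rewrite tcompE pidE. Qed.

Lemma tcomp1r n (f : ptrans n) : tcomp f (pid n) = f.
Proof. by apply/ffunP => x; rewrite tcompE; case: (f x) => //= y; rewrite pidE. Qed.

Lemma ppowS n (u : ptrans n) k : ppow u k.+1 = tcomp u (ppow u k).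
Proof. by []. Qed.

Lemma ppow_add n (u : ptrans n) a b : ppow u (a + b) = tcomp (ppow u a) (ppow u b).
Proof.
elim: a => [|a IH]; first by rewrite add0n /= tcomp1l.
by rewrite addSn !ppowS IH tcompA.
Qed.

Lemma tcomp_pow_in n (S : {set ptrans n}) (u : ptrans n) k :
  semigroup S -> u \in S -> forall w, w \in S -> tcomp w (ppow u k) \in S.
Proof.
move=> HS Hu; elim: k => [|k IH] w Hw; first by rewrite /= tcomp1r.
by rewrite ppowS -tcompA; apply: IH; apply: HS.
Qed.

Lemma ppow_in n (S : {set ptrans n}) (u : ptrans n) k :
  semigroup S -> u \in S -> ppow u k.+1 \in S.
Proof. by move=> HS Hu; rewrite ppowS; apply: tcomp_pow_in. Qed.

Lemma ppow_fix n (u : ptrans n) z k : u z = Some z -> ppow u k z = Some z.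
Proof.
move=> Hz; elim: k => [|k IH]; first by rewrite /= pidE.
by rewrite ppowS tcompE Hz.
Qed.

Lemma idem_fix n (e : ptrans n) z w : pinj e -> pidem e -> e z = Some w -> w = z.
Proof.
move=> Hi He Hz. have: tcomp e e z = Some w by rewrite He.
rewrite tcompE Hz /= => Hw. exact: (Hi _ _ _ Hw Hz).
Qed.

Lemma idem_pow n (u : ptrans n) : exists m, 0 < m /\ pidem (ppow u m).
Proof.
pose N := #|{: ptrans n}|.
pose F := fun k : 'I_N.+1 => ppow u k.+1.
have Hni : ~ injective F.
  move=> Hinj. have := leq_card F Hinj. by rewrite card_ord ltnn.
have [i [j [Hij Hne]]] : exists i j, F i = F j /\ i <> j.
  apply: NNPP => H; apply: Hni => i j Hij; apply: NNPP => Hne; apply: H; by exists i, j.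
have [p [d [Hp [Hd Hpd]]]] : exists p d, 0 < p /\ 0 < d /\ ppow u (p + d) = ppow u p.
  case: (ltngtP i j) => H.
  - exists i.+1, (j - i); split => //; split; first by rewrite subn_gt0.
    by rewrite addSn subnKC ?(ltnW H) // Hij.
  - exists j.+1, (i - j); split => //; split; first by rewrite subn_gt0.
    by rewrite addSn subnKC ?(ltnW H) // Hij.
  - by case: Hne; apply: val_inj.
have Hper : forall a, p <= a -> ppow u (a + d) = ppow u a.
  move=> a Ha; by rewrite -(subnK Ha) -addnA !(ppow_add u (a - p)) Hpd.
pose m := p * d.
have Hm : p <= m by rewrite /m leq_pmulr.
have perq : forall q, ppow u (m + q * d) = ppow u m.
  elim=> [|q IH]; first by rewrite addn0.
  by rewrite mulSn addnA addnAC Hper ?IH // (leq_trans Hm) // leq_addr.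
exists m; split; first by rewrite muln_gt0 Hp.
by rewrite /pidem -ppow_add {2}/m perq.
Qed.

Lemma idem_comp n (e1 e2 : ptrans n) : pinj e1 -> pidem e1 -> pinj e2 -> pidem e2 ->
  pidem (tcomp e1 e2).
Proof.
move=> I1 P1 I2 P2; apply/ffunP => z; rewrite !tcompE.
case H1: (e1 z) => [w|] //=. have ? := idem_fix I1 P1 H1; subst w.
case H2: (e2 z) => [w|] //=. have ? := idem_fix I2 P2 H2; subst w.
by rewrite tcompE H1 /= H2.
Qed.

Lemma count_lem n (S : {set ptrans n}) (a0 b0 : 'I_n) (c : ptrans n) :
  semigroup S -> pzero n \in S -> c \in S -> c a0 = None -> c b0 = Some a0 ->
  (forall z, reachS S a0 z) -> (2 * n).+1 <= #|S|.
Proof.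
move=> HS H0 Hc Ca Cb Hr.
have H z : exists f, (f \in S) && (f a0 == Some z).
  by case: (Hr z) => f Hf Hfz; exists f; rewrite Hf Hfz eqxx.
pose sel z := xchoose (H z).
have selP z : (sel z \in S) && (sel z a0 == Some z) := xchooseP (H z).
have hs z : sel z a0 = Some z by case/andP: (selP z) => _ /eqP.
have hc z : tcomp c (sel z) a0 = None by rewrite tcompE Ca.
have hb z : tcomp c (sel z) b0 = Some z by rewrite tcompE Cb /= hs.
pose F (o : option ('I_n + 'I_n)) := match o with None => pzero n
  | Some (inl z) => sel z | Some (inr z) => tcomp c (sel z) end.
have Finj : injective F.
  move=> [[z|z]|] [[z'|z']|] E;
  move: (congr1 (fun f : ptrans n => f a0) E) (congr1 (fun f : ptrans n => f b0) E) => /=;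
  rewrite ?hs ?hc ?hb ?pzeroE; congruence.
have sub : F @: setT \subset S.
  apply/subsetP => f /imsetP [[[z|z]|] _ ->] /=.
  - by case/andP: (selP z).
  - by apply: HS => //; case/andP: (selP z).
  - exact: H0.
have := subset_leq_card sub.
by rewrite card_imset // cardsT card_option card_sum card_ord mul2n -addnn.
Qed.

Theorem lemma3p2 (n : nat) (S : {set ptrans n}) (g h : ptrans n)
  (Hn : 2 <= n)
  (Hinj : forall f, f \in S -> pinj f)
  (HnotSn : forall f, f \in S -> ~ ptotal f)
  (Hsemi : semigroup S)
  (Htrans : semitransitive S)
  (Hcard : #|S| <= 2 * n)
  (HgS : g \in S) (HhS : h \in S)
  (Hg : pidem g) (Hh : pidem h)
  (Hg0 : g <> pzero n) (Hh0 : h <> pzero n) (Hgh : g <> h)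
  (Honly : forall e, e \in S -> pidem e -> e <> pzero n -> e = g \/ e = h)
  (phi : ptrans n)
  (Hphi : exists (a b s : ptrans n), [/\ (a = g \/ a = h), (b = g \/ b = h),
                             s \in S & phi = tcomp (tcomp a s) b])
  (Hnil : nilpotent phi)
  (blk : 'I_n -> nat)
  (Hblk : forall x y : 'I_n, reachS S x y <-> blk x <= blk y)
  (x y : 'I_n) (Hxy : phi x = Some y) :
  blk x < blk y.
Proof.
have pidS : forall e z w, e \in S -> pidem e -> e z = Some w -> w = z.
  by move=> e z w He Hid; apply: idem_fix (Hinj _ He) Hid.
have idS : forall u z, u \in S -> u z = Some z ->
    exists e, [/\ (e = g \/ e = h), e z = Some z & exists m, ppow u m.+1 = e].
  move=> u z Hu Hz; have [[|m] [Hm Hid]] := idem_pow u => //.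
  have HeS := ppow_in m Hsemi Hu.
  have Hez : ppow u m.+1 z = Some z by apply: ppow_fix.
  exists (ppow u m.+1); split => //; last by exists m.
  apply: (Honly) => // E; by rewrite E pzeroE in Hez.
have ghS : forall e, e = g \/ e = h -> e \in S /\ pidem e.
  by move=> e [->|->].
have cover : forall z, g z = Some z \/ h z = Some z.
  move=> z; have [f Hf Hfz] := Htrans z z.
  have {}Hfz : f z = Some z by case: Hfz.
  by have [e [[<-|<-] Hez _]] := idS f z Hf Hfz; [left|right].
pose k := tcomp g h.
have kS : k \in S by apply: (Hsemi).
have k0 : k = pzero n.
  apply: NNPP => Hk.
  have kid : pidem k by apply: idem_comp => //; apply: (Hinj).
  case: (Honly k kS kid Hk) => Ek.
  - apply: (HnotSn h HhS) => z; case: (cover z) => Hz.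
    + by have := f_equal (fun f : ptrans n => f z) Ek; rewrite /= /k tcompE Hz /= => ->.
    + by rewrite Hz.
  - apply: (HnotSn g HgS) => z; case: (cover z) => Hz.
    + by rewrite Hz.
    + have := f_equal (fun f : ptrans n => f z) Ek; rewrite /= /k tcompE Hz.
      by case: (g z).
have zS : pzero n \in S by rewrite -k0.
have disj : forall z, g z = Some z -> h z = Some z -> False.
  move=> z Hgz Hhz; have := f_equal (fun f : ptrans n => f z) k0.
  by rewrite /= /k tcompE Hgz /= Hhz pzeroE.
have same : forall e1 e2 z, (e1 = g \/ e1 = h) -> (e2 = g \/ e2 = h) ->
    e1 z = Some z -> e2 z = Some z -> e1 = e2.
  move=> e1 e2 z [->|->] [->|->] // H1 H2; exfalso; exact: disj H1 H2 || exact: disj H2 H1.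
case: Hphi => a [b [s [Ha Hb Hs Ephi]]].
have [aS aid] := ghS a Ha. have [bS bid] := ghS b Hb.
have phiS : phi \in S by rewrite Ephi; apply: (Hsemi) => //; apply: (Hsemi).
have phi_dom : forall z w, phi z = Some w -> a z = Some z /\ b w = Some w.
  move=> z w; rewrite Ephi !tcompE.
  case Haz: (a z) => [z'|] //=; have ? := pidS _ _ _ aS aid Haz; subst z'.
  case Hsz: (s z) => [t|] //= Hbt; split => //.
  by have ? := pidS _ _ _ bS bid Hbt; subst t.
rewrite ltnNge; apply/negP => Hyx.
have [f Hf Hfy] := (Hblk y x).2 Hyx.
pose u := tcomp phi f.
have uS : u \in S by apply: (Hsemi).
have ux : u x = Some x by rewrite /u tcompE Hxy /= Hfy.
have [E1 [HE1 E1x [m Em]]] := idS u x uS ux.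
pose r := tcomp f (ppow u m).
have rS : r \in S by apply: tcomp_pow_in.
have E1r : E1 = tcomp phi r by rewrite -Em ppowS /u tcompA.
have ax : a x = Some x by case: (phi_dom _ _ Hxy).
have by_ : b y = Some y by case: (phi_dom _ _ Hxy).
have E1a : E1 = a by apply: (same) HE1 Ha E1x ax.
have domA : forall z, a z = Some z -> exists w, phi z = Some w /\ r w = Some z.
  move=> z Hz; have := f_equal (fun f : ptrans n => f z) E1r.
  rewrite /= E1a Hz tcompE; case: (phi z) => [w|] //= Hw; by exists w.
have ab : a <> b.
  move=> Eab.
  have Hall : forall kk z, a z = Some z -> ppow phi kk z <> None.
    elim=> [|kk IH] z Hz; first by rewrite /= pidE.
    have [w [Hw _]] := domA z Hz.
    rewrite ppowS tcompE Hw /=; apply: IH.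
    by rewrite Eab; case: (phi_dom _ _ Hw).
  case: Hnil => kk Hkk; apply: (Hall kk x ax); by rewrite Hkk pzeroE.
have a_none : forall z, b z = Some z -> a z = None.
  move=> z Hz; case Haz: (a z) => [w|] //.
  have ? := pidS _ _ _ aS aid Haz; subst w.
  by case: ab; apply: (same) Ha Hb Haz Hz.
have b_none : forall z, a z = Some z -> b z = None.
  move=> z Hz; case Hbz: (b z) => [w|] //.
  have ? := pidS _ _ _ bS bid Hbz; subst w.
  by case: ab; apply: (same) Ha Hb Hz Hbz.
have abcov : forall z, a z = Some z \/ b z = Some z.
  move=> z; case: (cover z) => Hz; case: (Ha) => Ea; case: (Hb) => Eb;
  rewrite Ea Eb; (try by [left|right]); exfalso; apply: ab; by rewrite Ea Eb.
pose v := tcomp r phi.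
have vS : v \in S by apply: (Hsemi).
have vy : v y = Some y.
  by rewrite /v tcompE /r tcompE Hfy /= (ppow_fix m ux) /= Hxy.
have [E2 [HE2 E2y [m2 Em2]]] := idS v y vS vy.
pose q2 := tcomp phi (ppow v m2).
have q2S : q2 \in S by apply: tcomp_pow_in.
have E2r : E2 = tcomp r q2 by rewrite -Em2 ppowS /v tcompA.
have E2b : E2 = b by apply: (same) HE2 Hb E2y by_.
have [a0 Ha0] : exists a0, forall z, blk a0 <= blk z.
  exists [arg min_(i < x) blk i]; case: arg_minnP => // i _ Hi z; exact: Hi.
have reach0 : forall z, reachS S a0 z by move=> z; apply/Hblk.
suff [b0 [c [cS ca cb]]] : exists b0 c, [/\ c \in S, c a0 = None & c b0 = Some a0].
  have := count_lem Hsemi zS cS ca cb reach0.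
  by rewrite ltnNge Hcard.
case: (abcov a0) => H0.
- have [w [Hw Hrw]] := domA a0 H0.
  exists w, (tcomp b r); split.
  + exact: (Hsemi).
  + by rewrite tcompE b_none.
  + by rewrite tcompE; case: (phi_dom _ _ Hw) => _ ->.
- have := f_equal (fun f : ptrans n => f a0) E2r.
  rewrite /= E2b H0 tcompE; case Hra: (r a0) => [w|] //= Hq.
  exists w, (tcomp a q2); split.
  + exact: (Hsemi).
  + by rewrite tcompE a_none.
  + have : phi w <> None by move: Hq; rewrite /q2 tcompE; case: (phi w).
    case Hpw: (phi w) => [w'|] // _.
    by rewrite tcompE; case: (phi_dom _ _ Hpw) => -> _.
Qed.
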